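(* Let $\mathbf{A}\in\mathbb{R}^{n\times n}$ be symmetric positive semidefinite with $\mathbf{1}^{\intercal}\mathbf{A}=\mathbf{0}^{\intercal}$ and let $\mathbf{x}\in\{-1,1\}^n$. Let $M_0=\frac14\mathbf{x}^{\intercal}\mathbf{A}\mathbf{x}$, let $S_0=\{i:\mathbf{x}_i=1\}$ and $\bar S_0$ its complement, and assume $|S_0|\le n/2$. Let $s,t\in(0,\frac12]$ be such that $|S_0|=sn$ and $tn$ is an integer. Then there exists a set of nodes $T$ with $|T|=tn$ such that the cut $(T,\bar T)$ has value at least $\frac{(1-t)^2-7(1-t)/n+12/n^2}{(1-s)^2+(1-s)/n}M_0$ if $t>s$, and value at least $\frac{t^2-t/n}{s^2-s/n}M_0$ if $t<s$. Furthermore, $T$ can be obtained from $S_0$ by repeatedly moving a single node between the two sides of the cut, where each move (from a side $P$) decreases the current cut value by at most $\frac{2}{|P|}$ times the current cut value.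
   Context: For a set $T\subseteq\{1,\dots,n\}$, the value of the cut $(T,\bar T)$ is $\frac14\mathbf{y}^{\intercal}\mathbf{A}\mathbf{y}$ where $\mathbf{y}_i=1$ for $i\in T$ and $\mathbf{y}_i=-1$ otherwise. $\mathbf{1}$ is the all-ones vector. *)

(* Defs.v *)
From HB Require Import structures.
From mathcomp Require Import all_boot all_order all_algebra.
From mathcomp Require Import reals.
Set Implicit Arguments. Unset Strict Implicit. Unset Printing Implicit Defensive.
Import Order.TTheory GRing.Theory Num.Theory.
Local Open Scope ring_scope.

Definition psd_mx (R : realType) (n : nat) (A : 'M[R]_n) : Prop :=
  A^T = A /\ forall v : 'cV[R]_n, 0 <= (v^T *m A *m v) 0 0.

Definition sgnvec (R : realType) (n : nat) (T : {set 'I_n}) : 'cV[R]_n :=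
  \col_i (if i \in T then 1 else -1).

Definition cutval (R : realType) (n : nat) (A : 'M[R]_n) (T : {set 'I_n}) : R :=
  4^-1 * ((sgnvec R T)^T *m A *m sgnvec R T) 0 0.

Definition good_move (R : realType) (n : nat) (A : 'M[R]_n)
    (T1 T2 : {set 'I_n}) : Prop :=
  exists v : 'I_n,
    (v \notin T1 /\ T2 = v |: T1 /\
       cutval A T1 - cutval A T2 <= 2 / (#|~: T1|%:R) * cutval A T1)
 \/ (v \in T1 /\ T2 = T1 :\ v /\
       cutval A T1 - cutval A T2 <= 2 / (#|T1|%:R) * cutval A T1).

Definition reachable_by_moves (R : realType) (n : nat) (A : 'M[R]_n)
    (S T : {set 'I_n}) : Prop :=
  exists (k : nat) (f : nat -> {set 'I_n}),
    f 0%N = S /\ f k = T /\ forall j, (j < k)%N -> good_move A (f j) (f j.+1).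

(* Main.v *)
Require Import Defs.
From HB Require Import structures.
From mathcomp Require Import all_boot all_order all_algebra.
From mathcomp Require Import reals.
From mathcomp Require Import ring lra zify.
Set Implicit Arguments. Unset Strict Implicit. Unset Printing Implicit Defensive.
Import Order.TTheory GRing.Theory Num.Theory.
Local Open Scope ring_scope.

Definition gs (R : realType) n (A : 'M[R]_n) (P : {set 'I_n}) : R :=
  \sum_(i in P) \sum_(j in P) A i j.

Lemma sym_of (R : realType) n (A : 'M[R]_n) : A^T = A -> forall i j, A i j = A j i.
Proof. by move=> H i j; have := congr1 (fun M : 'M[R]_n => M j i) H; rewrite mxE. Qed.

Lemma col0_of (R : realType) n (A : 'M[R]_n) : const_mx 1 *m A = 0 :> 'rV[R]_n ->
  forall j, \sum_i A i j = 0.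
Proof.
move=> H j; have := congr1 (fun M : 'rV[R]_n => M 0 j) H; rewrite !mxE => E; rewrite -[RHS]E.
by apply: eq_bigr => i _; rewrite mxE mul1r.
Qed.

Lemma cutval_gs (R : realType) n (A : 'M[R]_n) (T : {set 'I_n}) :
  A^T = A -> const_mx 1 *m A = 0 :> 'rV[R]_n -> cutval A T = gs A T.
Proof.
move=> HS H1.
have col0 := col0_of H1. have sym := sym_of HS.
have row0 : forall i, \sum_j A i j = 0.
  move=> i. rewrite -[RHS](col0 i). apply: eq_bigr => j _; exact: sym.
rewrite /cutval mxE.
have hy : forall i, (sgnvec R T) i 0 = 2 * (i \in T)%:R - 1.
  by move=> i; rewrite mxE; case: (i \in T) => /=; ring.
pose a i := ((i \in T)%:R : R).
have E1 : forall j, ((sgnvec R T)^T *m A) 0 j = 2 * \sum_i a i * A i j.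
  move=> j; rewrite mxE.
  under eq_bigr => i _ do rewrite mxE hy mulrBl mul1r.
  rewrite sumrB col0 subr0 mulr_sumr; apply: eq_bigr => i _; by rewrite mulrA.
under eq_bigr => j _ do rewrite E1 hy mulrBr mulr1.
rewrite sumrB.
have E2 : \sum_j 2 * (\sum_i a i * A i j) = 0.
  rewrite -mulr_sumr exchange_big /=.
  under eq_bigr => i _ do rewrite -mulr_sumr row0 mulr0.
  by rewrite big1 ?mulr0.
rewrite E2 subr0.
have E3 : gs A T = \sum_j \sum_i a i * A i j * a j.
  rewrite /gs exchange_big /= big_mkcond; apply: eq_bigr => j _.
  rewrite big_mkcond /= /a. case: (j \in T) => /=.
    by apply: eq_bigr => i _; case: (i \in T) => /=; ring.
  by rewrite big1 // => i _; case: (i \in T); ring.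
rewrite E3 mulr_sumr; apply: eq_bigr => j _.
rewrite -mulr_suml /a; by field.
Qed.

Lemma cutval_ge0 (R : realType) n (A : 'M[R]_n) (T : {set 'I_n}) :
  psd_mx A -> 0 <= cutval A T.
Proof.
by move=> [_ H]; rewrite /cutval; apply: mulr_ge0; [rewrite invr_ge0 ler0n | exact: H].
Qed.

Lemma cutvalC (R : realType) n (A : 'M[R]_n) (T : {set 'I_n}) :
  cutval A (~: T) = cutval A T.
Proof.
rewrite /cutval.
have -> : sgnvec R (~: T) = - sgnvec R T.
  by apply/matrixP => i j; rewrite !mxE in_setC; case: (i \in T) => /=; rewrite ?opprK.
by rewrite mulmxN [(- _)^T]raddfN /= !mulNmx opprK.
Qed.

Lemma gs_decomp (R : realType) n (A : 'M[R]_n) (P : {set 'I_n}) v :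
  A^T = A -> v \in P ->
  gs A P - gs A (P :\ v) = 2 * \sum_(j in P) A v j - A v v.
Proof.
move=> HS Hv; have sym := sym_of HS.
have inner : forall i, \sum_(j in P) A i j = A i v + \sum_(j in P :\ v) A i j.
  by move=> i; rewrite (big_setD1 v Hv).
rewrite /gs (big_setD1 v Hv) /=.
rewrite (eq_bigr (fun i => A i v + \sum_(j in P :\ v) A i j) (fun i _ => inner i)).
rewrite big_split /= inner.
have -> : \sum_(i in P :\ v) A i v = \sum_(i in P :\ v) A v i.
  by apply: eq_bigr => i _; rewrite sym.
ring.
Qed.

Lemma exists_v (R : realType) n (A : 'M[R]_n) (P : {set 'I_n}) :
  psd_mx A -> const_mx 1 *m A = 0 :> 'rV[R]_n -> (0 < #|P|)%N ->
  exists2 v, v \in P &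
    cutval A P - cutval A (P :\ v) <= 2 / (#|P|%:R) * cutval A P.
Proof.
move=> Hpsd H1 HP; have [HS _] := Hpsd.
have gsE := fun T => cutval_gs T HS H1.
case: (boolP [exists v in P, cutval A P - cutval A (P :\ v) <= 2 / (#|P|%:R) * cutval A P]).
  by case/exists_inP => v Hv Hle; exists v.
rewrite negb_exists_in => /forall_inP Hall; exfalso.
have {}Hall : forall v, v \in P -> ~~ (gs A P - gs A (P :\ v) <= 2 / (#|P|%:R) * gs A P).
  by move=> v Hv; rewrite -!gsE; apply: Hall.
have Hd : 0 <= \sum_(v in P) A v v.
  apply: sumr_ge0 => v _.
  have := cutval_ge0 [set v] Hpsd; rewrite gsE /gs.
  by rewrite !big_set1.
have Hsum : \sum_(v in P) (gs A P - gs A (P :\ v)) <= 2 * gs A P.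
  rewrite (eq_bigr (fun v => 2 * \sum_(j in P) A v j - A v v)); last first.
    by move=> v Hv; rewrite gs_decomp.
  rewrite sumrB -mulr_sumr -/(gs A P); lra.
have Hgt : \sum_(v in P) (2 / (#|P|%:R) * gs A P) <
           \sum_(v in P) (gs A P - gs A (P :\ v)).
  apply: ltr_sum.
    case/card_gt0P: HP => v0 Hv0; apply/hasP; exists v0 => //.
  by move=> v Hv; rewrite ltNge; apply: Hall.
move: Hgt; rewrite sumr_const -[_ *+ #|P|]mulr_natr.
have HP' : (#|P|%:R : R) != 0 by rewrite pnatr_eq0 -lt0n.
have -> : 2 / (#|P|%:R) * gs A P * (#|P|%:R) = 2 * gs A P by field.
lra.
Qed.

Lemma step_real (R : realType) (b q q' D Q0 : R) :
  1 <= b -> 0 <= q' -> 0 <= D -> 0 <= Q0 -> q - q' <= 2 / b * q ->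
  b * (b - 1) * Q0 <= q * D -> (b - 1) * (b - 1 - 1) * Q0 <= q' * D.
Proof.
move=> Hb Hq' HD HQ Hqq Hinv.
have Hb0 : 0 < b by lra.
have H1 : b * q - b * q' <= 2 * q.
  have := ler_wpM2l (ltW Hb0) Hqq.
  have -> : b * (2 / b * q) = 2 * q by field; rewrite gt_eqF.
  lra.
case: (lerP 2 b) => Hb2.
  have P1 : 0 <= (b * q' - (b - 2) * q) * D by apply: mulr_ge0 => //; lra.
  have P2 : 0 <= (q * D - b * (b - 1) * Q0) * (b - 2) by apply: mulr_ge0; lra.
  rewrite -(ler_pM2l Hb0); nra.
have P3 : (b - 1) * (b - 1 - 1) * Q0 <= 0.
  apply: mulr_le0_ge0 => //; apply: mulr_ge0_le0; lra.
have := mulr_ge0 Hq' HD; lra.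
Qed.

Lemma iterate (R : realType) n (A : 'M[R]_n) (side : {set 'I_n} -> {set 'I_n}) :
  (forall T, 0 <= cutval A T) ->
  (forall T, (0 < #|side T|)%N -> exists T2, good_move A T T2 /\
      #|side T2| = (#|side T|).-1 /\
      cutval A T - cutval A T2 <= 2 / (#|side T|%:R) * cutval A T) ->
  forall S m, (m <= #|side S|)%N -> exists T, reachable_by_moves A S T /\
    #|side T| = (#|side S| - m)%N /\
    (#|side T|%:R * (#|side T|%:R - 1)) * cutval A S
      <= cutval A T * (#|side S|%:R * (#|side S|%:R - 1)).
Proof.
move=> Hge0 Hstep S; elim=> [|m IH] Hm.
  exists S; split; last by rewrite subn0 mulrC.
  by exists 0%N, (fun _ => S).
have [T [Hr [Hc Hineq]]] := IH (ltnW Hm).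
have Hpos : (0 < #|side T|)%N by rewrite Hc subn_gt0.
have [T2 [Hg [Hc2 Hb]]] := Hstep T Hpos.
exists T2; split.
  case: Hr => k [f [f0 [fk fj]]].
  exists k.+1, (fun j => if j == k.+1 then T2 else f j); split => //.
  split; first by rewrite eqxx.
  move=> j Hj /=; rewrite eqSS.
  have -> : (j == k.+1) = false by apply/negbTE; rewrite neq_ltn Hj.
  case: (eqVneq j k) => [->|Hjk]; first by rewrite fk.
  by apply: fj; rewrite ltn_neqAle Hjk -ltnS.
split; first by rewrite Hc2 Hc subnS.
have HS1 : (1 <= #|side S|)%N by apply: leq_trans Hm.
have Hb2 : (#|side T2|%:R : R) = #|side T|%:R - 1.
  by rewrite Hc2 -subn1 natrB.
rewrite Hb2; apply: (step_real (q := cutval A T)) => //.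
- by rewrite ler1n.
- have : (1 <= (#|side S|%:R : R)) by rewrite ler1n.
  move=> h; apply: mulr_ge0; lra.

Qed.

Lemma step_id (R : realType) n (A : 'M[R]_n) :
  psd_mx A -> const_mx 1 *m A = 0 :> 'rV[R]_n ->
  forall T : {set 'I_n}, (0 < #|T|)%N -> exists T2, good_move A T T2 /\
      #|T2| = (#|T|).-1 /\
      cutval A T - cutval A T2 <= 2 / (#|T|%:R) * cutval A T.
Proof.
move=> Hpsd H1 T HT.
have [v Hv Hb] := exists_v Hpsd H1 HT.
exists (T :\ v); split; first by exists v; right.
by split => //; rewrite [in RHS](cardsD1 v T) Hv.
Qed.

Lemma step_C (R : realType) n (A : 'M[R]_n) :
  psd_mx A -> const_mx 1 *m A = 0 :> 'rV[R]_n ->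
  forall T : {set 'I_n}, (0 < #|~: T|)%N -> exists T2, good_move A T T2 /\
      #|~: T2| = (#|~: T|).-1 /\
      cutval A T - cutval A T2 <= 2 / (#|~: T|%:R) * cutval A T.
Proof.
move=> Hpsd H1 T HT.
have [v Hv Hb] := exists_v Hpsd H1 HT.
have E : ~: (v |: T) = ~: T :\ v by rewrite setCU setDE setIC.
rewrite -E !cutvalC in Hb.
exists (v |: T); split.
  by exists v; left; split; [rewrite -in_setC | split].
by split => //; rewrite E [in RHS](cardsD1 v (~: T)) Hv.
Qed.

Theorem lemma3p7 (R : realType) (n : nat) (A : 'M[R]_n) (x : 'cV[R]_n)
    (s t : R) :
  psd_mx A ->
  const_mx 1 *m A = 0 :> 'rV[R]_n ->
  (forall i, x i 0 = 1 \/ x i 0 = -1) ->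
  let M0 := 4^-1 * (x^T *m A *m x) 0 0 in
  let S0 := [set i | x i 0 == 1] in
  (#|S0|%:R <= n%:R / 2 :> R) ->
  0 < s -> s <= 2^-1 -> 0 < t -> t <= 2^-1 ->
  #|S0|%:R = s * n%:R ->
  (exists k : nat, t * n%:R = k%:R) ->
  exists T : {set 'I_n},
    #|T|%:R = t * n%:R /\
    (s < t -> cutval A T >=
       ((1 - t) ^+ 2 - 7 * (1 - t) / n%:R + 12 / n%:R ^+ 2)
       / ((1 - s) ^+ 2 + (1 - s) / n%:R) * M0) /\
    (t < s -> cutval A T >=
       (t ^+ 2 - t / n%:R) / (s ^+ 2 - s / n%:R) * M0) /\
    reachable_by_moves A S0 T.
Proof.
move=> Hpsd H1 Hx M0 S0 HS0 Hs0 Hs12 Ht0 Ht12 Hsn [k Hk].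
have [HS _] := Hpsd.
have Hge0 := fun T => cutval_ge0 T Hpsd.
have HxS : x = sgnvec R S0.
  apply/matrixP => i j; rewrite (ord1 j) !mxE inE.
  by case: (Hx i) => ->; rewrite ?eqxx //; case: eqP => // h; lra.
have HM0 : M0 = cutval A S0 by rewrite /cutval -HxS.
have HM0ge : 0 <= M0 by rewrite HM0.
have refl : reachable_by_moves A S0 S0 by exists 0%N, (fun _ => S0).
case: (posnP n) => Hn.
  subst n; exists S0.
  have Z : forall T, cutval A T = 0.
    by move=> T; rewrite (cutval_gs T HS H1) /gs big1 // => -[].
  have M00 : M0 = 0 by rewrite HM0 Z.
  rewrite !Z M00 Hsn !mulr0.
  by repeat split => //.
set N := (n%:R : R).
have HN : 0 < N by rewrite ltr0n.
set a0 := #|S0|.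
have ha0 : (0 < a0)%N by rewrite -(ltr0n R) Hsn mulr_gt0.
have hk0 : (0 < k)%N by rewrite -(ltr0n R) -Hk mulr_gt0.
have ha2 : (a0 * 2 <= n)%N.
  rewrite -(ler_nat R) natrM -/N.
  by have := HS0; rewrite -/N -/a0 => h; lra.
have hk2 : (k * 2 <= n)%N.
  rewrite -(ler_nat R) natrM -/N -Hk; have := ler_wpM2r (ltW HN) Ht12; lra.
have hs : s = a0%:R / N by rewrite Hsn; field; rewrite gt_eqF.
have ht : t = k%:R / N by rewrite -Hk; field; rewrite gt_eqF.
have HcS : #|~: S0| = (n - a0)%N by rewrite -[in RHS](card_ord n) -(cardsC S0) addKn.
case: (ltgtP s t) => Hst; last first.
- exists S0; split; first by rewrite Hsn Hst.
  by repeat split => //.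
-
  have hka : (k < a0)%N.
    by rewrite -(ltr_nat R) -Hk Hsn ltr_pM2r.
  have [T [Hr [Hc Hinv]]] := iterate Hge0 (step_id Hpsd H1) (leq_subr k a0).
  have HcT : #|T| = k by rewrite Hc subKn // ltnW.
  exists T; split; first by rewrite HcT Hk.
  split => //; split => // _.
  rewrite HcT -/a0 in Hinv.
  have Ha1 : (2 <= a0)%N by apply: leq_ltn_trans hka.
  have Ha1' : (2 : R) <= a0%:R by rewrite ler_nat.
  have -> : (t ^+ 2 - t / N) / (s ^+ 2 - s / N) = k%:R * (k%:R - 1) / (a0%:R * (a0%:R - 1)).
    have p4 : 0 < a0%:R ^+ 2 - a0%:R :> R by rewrite expr2; nra.
    by rewrite hs ht; field; rewrite !gt_eqF //; lra.
  rewrite mulrAC ler_pdivrMr; last by apply: mulr_gt0; lra.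
  by rewrite HM0.
-
  have hak : (a0 < k)%N.
    by rewrite -(ltr_nat R) -Hk Hsn ltr_pM2r.
  have Hm : (k - a0 <= #|~: S0|)%N by rewrite HcS; lia.
  have [T [Hr [Hc Hinv]]] :=
    iterate (side := fun T => ~: T) Hge0 (step_C Hpsd H1) Hm.
  rewrite HcS in Hc.
  have HcTc : #|~: T| = (n - k)%N by rewrite Hc; lia.
  have HcT : #|T| = k by have := cardsC T; rewrite card_ord HcTc; lia.
  exists T; split; first by rewrite HcT Hk.
  split; last by split.
  move=> _.
  rewrite HcTc HcS in Hinv.
  set X := ((n - k)%N%:R : R) in Hinv *.
  set Y := ((n - a0)%N%:R : R) in Hinv *.
  have hX : X = N - k%:R by rewrite /X natrB //; lia.
  have hY : Y = N - a0%:R by rewrite /Y natrB //; lia.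
  have X2 : 2 <= X by rewrite /X ler_nat; lia.
  have XY : X + 1 <= Y by rewrite /X /Y natr1 ler_nat; lia.
  have h1t : 1 - t = X / N by rewrite ht hX; field; rewrite gt_eqF.
  have h1s : 1 - s = Y / N by rewrite hs hY; field; rewrite gt_eqF.
  rewrite h1t h1s.
  have pY : 0 < Y ^+ 2 + Y by rewrite expr2; nra.
  have pY2 : 0 < Y * (Y - 1) by nra.
  have -> : ((X / N) ^+ 2 - 7 * (X / N) / N + 12 / N ^+ 2) / ((Y / N) ^+ 2 + Y / N / N)
      = (X ^+ 2 - 7 * X + 12) / (Y ^+ 2 + Y).
    by field; rewrite !gt_eqF //; lra.
  apply: (le_trans (y := X * (X - 1) / (Y * (Y - 1)) * M0)).
    apply: ler_wpM2r => //.
    rewrite -subr_ge0.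
    have -> : X * (X - 1) / (Y * (Y - 1)) - (X ^+ 2 - 7 * X + 12) / (Y ^+ 2 + Y)
       = (2 * Y * (X ^+ 2 - X) + (6 * X - 12) * (Y ^+ 2 - Y)) / ((Y ^+ 2 + Y) * (Y * (Y - 1))).
      by field; rewrite !gt_eqF //; lra.
    apply: divr_ge0; last by apply: mulr_ge0; lra.
    have q1 : 0 <= 2 * Y * (X ^+ 2 - X).
      by apply: mulr_ge0; [lra | rewrite expr2; nra].
    have q2 : 0 <= (6 * X - 12) * (Y ^+ 2 - Y).
      by apply: mulr_ge0; [lra | rewrite expr2; nra].
    lra.
  by rewrite mulrAC ler_pdivrMr // HM0.
Qed.
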